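(* Let $Z$ and $V$ be real Banach spaces, let $D \subset Z$ be open, let $F: D \to V$, and let $r \in D$ satisfy $F(r) = 0$. Suppose $F$ is semismooth at $r$ with Newton derivative $H: D \to L(Z,V)$ on an open neighbourhood $N \subset D$ of $r$ (in the sense defined in the context). Further assume that $H(z)$ is invertible for every $z \in N$ and that $\{\|H(z)^{-1}\| : z \in N\}$ has a finite upper bound $\Gamma$. Let $p \ge 1$. Then each of the operators $$M(z;r) = \frac{\mathcal{I}_V}{\|z-r\|_Z^p} \qquad\text{and}\qquad M(z;r) = \left(\frac{1}{\|z-r\|_Z^p} + 1\right)\mathcal{I}_V, \qquad z \in Z\setminus\{r\},$$ where $\mathcal{I}_V$ is the identity map on $V$, is a deflation operator for $F$ at $r$; that is, $M(z;r) \in L(V,V)$ is invertible for all $z \neq r$ in a neighbourhood of $r$, and $$\liminf_{z \to r} \|M(z;r)F(z)\|_V > 0.$$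
   Context: Semismoothness: $F: D \subset Z \to V$ ($D$ open) is semismooth at $z \in D$ if it is locally Lipschitz continuous at $z$ and there exist an open neighbourhood $N \subset D$ containing $z$ and a mapping $H: D \to L(Z,V)$ (a Newton derivative) such that $F(w+h) - F(w) - H(w+h)h = o(\|h\|_Z)$ as $h \to 0$, for all $w \in N$. A deflation operator for $F$ at a root $r$ is a map $M(\cdot;r): Z\setminus\{r\} \to L(V,V)$ such that $M(z;r)$ is invertible for all $z \ne r$ in a neighbourhood of $r$ and $\liminf_{z\to r}\|M(z;r)F(z)\|_V > 0$. *)

(* Defs.v *)
From HB Require Import structures.
From mathcomp Require Import all_boot all_order all_algebra.
From mathcomp Require Import all_classical all_reals all_analysis.
Set Implicit Arguments. Unset Strict Implicit. Unset Printing Implicit Defensive.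
Import Order.TTheory GRing.Theory Num.Theory.
Import numFieldNormedType.Exports.
Local Open Scope classical_set_scope.
Local Open Scope ring_scope.

Section Ops.
Variable R : realType.

Definition bounded_linear (U W : normedModType R) (f : U -> W) : Prop :=
  linear f /\ continuous f.

Definition inverse_op (U W : normedModType R) (A : U -> W) (B : W -> U) : Prop :=
  bounded_linear B /\ cancel A B /\ cancel B A.

Definition invertible_op (U W : normedModType R) (A : U -> W) : Prop :=
  exists B : W -> U, inverse_op A B.

Definition opnorm (U W : normedModType R) (B : U -> W) : \bar R :=
  ereal_sup [set (`|B v|)%:E | v in [set v : U | `|v| <= 1]].

Definition locally_lipschitz_at (U W : normedModType R) (F : U -> W) (z : U) : Prop :=
  exists2 Nz : set U, nbhs z Nz & [lipschitz F x | x in Nz].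

Definition newton_derivative_on (U W : normedModType R) (D N : set U)
    (F : U -> W) (H : U -> U -> W) : Prop :=
  (forall z, D z -> bounded_linear (H z)) /\
  (forall w, N w ->
     (fun h : U => F (w + h) - F w - H (w + h) h) =o_ (0 : U) (fun h : U => `|h|)).

Definition semismooth_at_with (U W : normedModType R) (D : set U) (F : U -> W)
    (z : U) (N : set U) (H : U -> U -> W) : Prop :=
  [/\ locally_lipschitz_at F z, open N, N z, N `<=` D &
      newton_derivative_on D N F H].

Definition deflation_operator (U W : normedModType R) (M : U -> W -> W)
    (F : U -> W) (r : U) : Prop :=
  [/\ (forall z, z != r -> bounded_linear (M z)),
      (\forall z \near r, z != r -> invertible_op (M z)) &
      (0 < limf_einf (fun z => (`|M z (F z)|)%:E) (r^'))%E].

End Ops.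

(* Main.v *)
Require Import Defs.
From HB Require Import structures.
From mathcomp Require Import all_boot all_order all_algebra.
From mathcomp Require Import all_classical all_reals all_analysis.
From mathcomp Require Import lra.
Import Order.TTheory GRing.Theory Num.Theory.
Import numFieldNormedType.Exports.
Local Open Scope classical_set_scope.
Local Open Scope ring_scope.

Set Implicit Arguments.
Section Helpers.
Context {R : realType}.

Lemma scale_bl (W : normedModType R) (c : R) : bounded_linear (fun v : W => c *: v).
Proof.
split; last exact: scaler_continuous.
by move=> a u v; rewrite scalerDr !scalerA mulrC.
Qed.

Lemma scale_inv (W : normedModType R) (c : R) : c != 0 ->
  invertible_op (fun v : W => c *: v).
Proof.
move=> c0; exists (fun v : W => c^-1 *: v); split; first exact: scale_bl.
by split=> v; rewrite scalerA ?mulVf ?mulfV // scale1r.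
Qed.

Lemma opnorm_bound (U W : normedModType R) (B : W -> U) (G : R) :
  linear B -> (opnorm B <= G%:E)%E -> forall v, `|B v| <= G * `|v|.
Proof.
move=> Bl HG v.
have Bs := scalable_linear Bl.
have B0 : B 0 = 0.
  have := zmod_morphism_linear Bl 0 0; rewrite subrr => ->; by rewrite subrr.
have [->|v0] := eqVneq v 0; first by rewrite B0 !normr0 mulr0.
have nv : 0 < `|v| by rewrite normr_gt0.
have hu : (`|B (`|v|^-1 *: v)|%:E <= G%:E)%E.
  apply: le_trans HG; rewrite /opnorm; apply: ereal_sup_ubound => /=; exists (`|v|^-1 *: v) => //=.
  by rewrite normrZ ger0_norm ?invr_ge0 ?normr_ge0 // mulVf ?gt_eqF.
move: hu; rewrite lee_fin Bs normrZ ger0_norm ?invr_ge0 ?normr_ge0 //.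
by rewrite ler_pdivrMl // mulrC.
Qed.

Lemma liminf_ge (U : normedModType R) (f : U -> \bar R) (r : U) (a : R) :
  (\forall z \near r, z != r -> (a%:E <= f z)%E) ->
  (a%:E <= limf_einf f r^')%E.
Proof.
move=> Ha; rewrite limf_einfE.
set S := [set z | z != r /\ (a%:E <= f z)%E].
apply: (@le_trans _ _ (ereal_inf (f @` S))).
  by apply/ereal_infP => _ [z [_ h] <-].
apply: ereal_sup_ubound; exists S => //.
rewrite /within /=; apply: filterS Ha => z h zr; split => //; exact: h.
Qed.

End Helpers.

Theorem mainTheorem1 (R : realType) (Z V : completeNormedModType R)
    (D : set Z) (F : Z -> V) (r : Z) (N : set Z) (H : Z -> Z -> V) (p : R) :
  open D -> D r -> F r = 0 ->
  semismooth_at_with D F r N H ->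
  (forall z, N z -> invertible_op (H z)) ->
  (exists Gamma : R, forall z, N z -> forall B : V -> Z,
      inverse_op (H z) B -> (opnorm B <= Gamma%:E)%E) ->
  1 <= p ->
  deflation_operator (fun z (v : V) => (`|z - r| `^ p)^-1 *: v) F r /\
  deflation_operator (fun z (v : V) => ((`|z - r| `^ p)^-1 + 1) *: v) F r.
Proof.
move=> oD Dr Fr0 [_ oN Nr ND [Hbl Ho]] Hinv [G HG] p1.
set G0 := Num.max G 1.
have G0pos : 0 < G0 by rewrite lt_max ltr01 orbT.
have HB : forall z, N z -> forall B, inverse_op (H z) B ->
    forall v, `|B v| <= G0 * `|v|.
  move=> z Nz B iB v; have [[Bl _] _] := iB.
  apply: le_trans (@opnorm_bound R Z V B G Bl (HG z Nz B iB) v) _.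
  by apply: ler_wpM2r => //; rewrite le_max lexx.
set eps := (2 * G0)^-1.
have epos : 0 < eps by rewrite invr_gt0 mulr_gt0.
have Nnear : \forall z \near r, N z by move: oN; rewrite openE => /(_ r Nr).
have small : \forall z \near r, `|z - r| <= 1.
  apply/nbhs0P; apply: filterS (nbhs0_le ltr01) => e /=.
  by rewrite [r + e]addrC addrK.
have oh : \forall z \near r, `|F z - F r - H z (z - r)| <= eps * `| `|z - r| |.
  move/eqoP: (Ho r Nr) => o; have := o eps epos => oh.
  apply/nbhs0P; apply: filterS oh => h /=.
  by rewrite [r + h]addrC addrK.
have key : \forall z \near r, z != r ->
    eps <= (`|z - r| `^ p)^-1 * `|F z|.
  near=> z => znr.
  have Nz : N z by near: z.
  have d1 : `|z - r| <= 1 by near: z.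
  have oz : `|F z - F r - H z (z - r)| <= eps * `| `|z - r| | by near: z.
  rewrite normr_id Fr0 subr0 in oz.
  have dpos : 0 < `|z - r| by rewrite normr_gt0 subr_eq0.
  have [B iB] := Hinv z Nz.
  have [_ [c1 _]] := iB.
  have e1 : `|z - r| <= G0 * `|H z (z - r)|.
    by have := HB z Nz B iB (H z (z - r)); rewrite c1.
  have e2 : `|H z (z - r)| <= `|F z| + eps * `|z - r|.
    have -> : H z (z - r) = F z - (F z - H z (z - r)).
      by rewrite opprB addrCA subrr addr0.
    apply: le_trans (ler_normB _ _) _; exact: lerD.
  have ge : G0 * eps = 2^-1 by rewrite /eps invfM mulrA mulrC mulrA mulVf ?gt_eqF // mul1r.
  have e3 : eps * `|z - r| <= `|F z|.
    have : `|z - r| <= G0 * `|F z| + 2^-1 * `|z - r|.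
      by rewrite -ge -mulrA -mulrDr; apply: le_trans e1 _; apply: ler_wpM2l => //; exact: ltW.
    move=> h.
    have h2 : `|z - r| <= 2 * G0 * `|F z| by lra.
    rewrite /eps ler_pdivrMl ?mulr_gt0 //.
  have qpos : 0 < `|z - r| `^ p by rewrite powR_gt0.
  have qd : `|z - r| `^ p <= `|z - r| by apply: ge1r_powR => //; rewrite dpos.
  rewrite ler_pdivlMl //; apply: le_trans e3.
  by rewrite mulrC; apply: ler_wpM2l => //; exact: ltW.
split; split.
- by move=> z _; exact: scale_bl.
- near=> z => znr; apply: scale_inv.
  by rewrite invr_neq0 // gt_eqF // powR_gt0 // normr_gt0 subr_eq0.
- apply: (@lt_le_trans _ _ eps%:E); first by rewrite lte_fin.
  apply: liminf_ge.
  apply: filterS key => z h zr; rewrite lee_fin normrZ ger0_norm ?invr_ge0 ?powR_ge0 //.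
  exact: h.
- by move=> z _; exact: scale_bl.
- near=> z => znr; apply: scale_inv.
  by rewrite gt_eqF // ltr_wpDl // ?invr_ge0 ?powR_ge0.
- apply: (@lt_le_trans _ _ eps%:E); first by rewrite lte_fin.
  apply: liminf_ge.
  apply: filterS key => z h zr; rewrite lee_fin normrZ ger0_norm; last first.
    by rewrite addr_ge0 ?invr_ge0 ?powR_ge0.
  apply: le_trans (h zr) _; apply: ler_wpM2r => //; rewrite lerDl //.
Unshelve. all: by end_near.
Qed.
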